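(* Let $\mathbf A_{\mathrm{Chem}}=\mathbf{uGraph}/T_{\mathcal A}$ be the ambient category of a Chem model with structural constraint $c_{\mathrm{Chem}}$, considered with DPO-type restricted rewriting. Let $R:=(r,c_I)$ be a rule with condition, where $r=(O\hookleftarrow K\hookrightarrow I)$ is a linear rule in $\mathbf A_{\mathrm{Chem}}$ whose restriction to vertex sets $V_O\leftarrow V_K\to V_I$ is a span of isomorphisms. Let $\overline R:=[(r,\overline{c_I})]_{\bar\sim}$ and $\overline R_{id}:=[(r_{id},\overline{c_I})]_{\bar\sim}$ with $r_{id}:=(I\xleftarrow{id}I\xrightarrow{id}I)$. Then for every state $X$ (object of $\mathbf A_{\mathrm{Chem}}$ with $X\models c_{\mathrm{Chem}}$), $\langle|\overline{\mathbb O}(\bar\delta(\overline R))|X\rangle=\langle|\overline{\mathbb O}(\bar\delta(\overline R_{id}))|X\rangle$; moreover $\overline{\mathbb O}(\bar\delta(\overline R))=\overline{\mathbb O}(\bar\delta(\overline R_{id}))$ as linear operators on $\hat{\overline{\mathbf S}}_{\mathrm{Chem}}$.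
   Context: $\mathbf{uGraph}$ is the category of finite undirected multigraphs $(E,V,i:E\to\mathcal P^{(1,2)}(V))$ (edges have one or two endpoints), $\mathcal M$ the component-wise injective morphisms. A Chem model fixes a finite set of atom types $\mathcal A$, bond types $\{-,=,\equiv\}$, and a type graph $T_{\mathcal A}$ with one vertex type, one loop-edge type per atom type and one edge type per bond type; $\mathbf A_{\mathrm{Chem}}$ is the slice category of $\mathbf{uGraph}$ over $T_{\mathcal A}$ (typed undirected multigraphs), and $c_{\mathrm{Chem}}$ is a fixed constraint (a nested condition over the empty graph $\varnothing$, built from $\mathsf{true}$, $\exists(f,c)$ for $f\in\mathcal M$, $\neg$, $\wedge$) encoding the chemical laws; states are objects $X$ with $X\models c_{\mathrm{Chem}}$, i.e. $(\varnothing\hookrightarrow X)\models c_{\mathrm{Chem}}$, and $\hat{\overline{\mathbf S}}_{\mathrm{Chem}}$ is the real vector space with basis $|X\rangle$ indexed by isomorphism classes of states, with $\langle|X\rangle:=1$. DPO direct derivation of $(r,c)$ along $m:I\hookrightarrow X$ in $\mathcal M$: admissible if $m\models c$ and a pushout complement of $K\hookrightarrow I\to X$ exists; result is the pushout along $K\hookrightarrow O$. $\mathsf{Shift}(f,c)$ is the condition with $g\circ f\models c\iff g\models\mathsf{Shift}(f,c)$; $\mathsf{Trans}(r,c_O)$ the condition over $I$ with $m\models\mathsf{Trans}(r,c_O)$ iff the comatch satisfies $c_O$, for admissible matches $m$. The constraint-preserving completion of $c_I$ for $r$ is $\overline{c_I}:=\mathsf{Shift}(\varnothing\hookrightarrow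 I,c_{\mathrm{Chem}})\Rightarrow\big(c_I\wedge\mathsf{Trans}(r,\mathsf{Shift}(\varnothing\hookrightarrow O,c_{\mathrm{Chem}}))\wedge\mathsf{Shift}(\varnothing\hookrightarrow I,c_{\mathrm{Chem}})\big)$. $(r,c)\mathrel{\bar\sim}(r',c')$ iff $r\cong r'$ and their completed conditions are equivalent on admissible matches; $\bar\delta$ denotes basis vectors indexed by $\bar\sim$-classes. The restricted DPO representation is $\bar\rho(\bar\delta(R'))|X\rangle=\sum_{\bar m}|\overline{R'}_{\bar m}(X)\rangle$ (sum over DPO-admissible matches of the completed rule into $X$), and the restricted DPO jump-closure operator is $\overline{\mathbb O}(\bar\delta(O\hookleftarrow K\hookrightarrow I,c)):=\bar\rho(\bar\delta(I\hookleftarrow K\hookrightarrow I,c))$. *)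

(* Defs.v *)
From mathcomp Require Import all_boot.
From mathcomp Require Import boolp.
Set Implicit Arguments. Unset Strict Implicit. Unset Printing Implicit Defensive.

(* Typed undirected multigraphs over the Chem type graph T_A.               *)
(* T_A has one vertex and one (loop) edge per atom type (A) and per bond    *)
(* type ('I_3 = {single, double, triple}).  Since T_A has a single vertex,  *)
(* a typing morphism X -> T_A is exactly a labelling of the edges of X by   *)
(* A + 'I_3 (the vertex component is forced, and the endpoint condition     *)
(* i_T(t e) = {*} = t_V(i(e)) holds automatically as i(e) is nonempty).     *)

Definition edge_type (A : finType) : finType := (A + 'I_3)%type.

Record tgraph (A : finType) := TGraph {
  V : finType;
  E : finType;
  ends : E -> {set V};
  ends_ok : forall e, 0 < #|ends e| <= 2;
  typ : E -> edge_type A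
}.
Arguments V {A} t.
Arguments E {A} t.
Arguments ends {A} t _.
Arguments typ {A} t _.

Section Chem.
Variable A : finType.
Implicit Types G H X Y : tgraph A.

Definition hom G H := ((V G -> V H) * (E G -> E H))%type.

Definition ishom G H (f : hom G H) : Prop :=
  (forall e, ends H (f.2 e) = [set f.1 x | x in ends G e]) /\
  (forall e, typ H (f.2 e) = typ G e).

(* the class M: component-wise injective morphisms *)
Definition mono G H (f : hom G H) : Prop := injective f.1 /\ injective f.2.

Definition idh G : hom G G := (id, id).
Definition comp G H Y (g : hom H Y) (f : hom G H) : hom G Y :=
  (fun v => g.1 (f.1 v), fun e => g.2 (f.2 e)).
Definition heq G H (f g : hom G H) : Prop := f.1 =1 g.1 /\ f.2 =1 g.2.

Lemma empty_ends_ok (e : void) : 0 < #|(set0 : {set void})| <= 2.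
Proof. by case: e. Qed.
Definition empty : tgraph A :=
  @TGraph A void void (fun _ => set0) empty_ends_ok (fun e => match e with end).
Definition init X : hom empty X :=
  (fun v : void => match v with end, fun e : void => match e with end).

Definition is_pushout P B C D (f : hom P B) (g : hom P C) (h : hom B D)
    (k : hom C D) : Prop :=
  [/\ ishom f /\ ishom g, ishom h, ishom k,
      heq (comp h f) (comp k g) &
      forall Z (u : hom B Z) (v : hom C Z), ishom u -> ishom v ->
        heq (comp u f) (comp v g) ->
        exists x : hom D Z, [/\ ishom x, heq (comp x h) u, heq (comp x k) v &
          forall y : hom D Z, ishom y -> heq (comp y h) u -> heq (comp y k) v ->
            heq y x]].

Inductive cond : tgraph A -> Type :=
| CTrue P : cond P
| CEx P Q (f : hom P Q) : ishom f -> mono f -> cond Q -> cond P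
| CNot P : cond P -> cond P
| CAnd P : cond P -> cond P -> cond P.

Fixpoint sat P (c : cond P) X {struct c} : hom P X -> Prop :=
  match c in cond P return hom P X -> Prop with
  | CTrue _ => fun _ => True
  | CEx P Q f _ _ c' => fun m =>
      exists q : hom Q X, [/\ ishom q, mono q, heq (comp q f) m & sat c' q]
  | CNot _ c' => fun m => ~ sat c' m
  | CAnd _ c1 c2 => fun m => sat c1 m /\ sat c2 m
  end.

Definition models X (c : cond empty) : Prop := sat c (init X).

Record rule := Rule { rO : tgraph A; rK : tgraph A; rI : tgraph A;
                      lO : hom rK rO; lI : hom rK rI }.

Definition linear_rule (r : rule) : Prop :=
  [/\ ishom (lO r), ishom (lI r), mono (lO r) & mono (lI r)].

Definition vertex_iso (r : rule) : Prop :=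
  bijective (lO r).1 /\ bijective (lI r).1.

Definition rid (I : tgraph A) : rule := @Rule I I I (idh I) (idh I).

Definition jump (r : rule) : rule := @Rule (rI r) (rK r) (rI r) (lI r) (lI r).

(* semantic conditions on matches (what a nested condition over I denotes) *)
Definition mcond (I : tgraph A) := forall X, hom I X -> Prop.

Definition pushout_complement (r : rule) X (m : hom (rI r) X) : Prop :=
  exists (D : tgraph A) (g : hom (rK r) D) (k : hom D X),
    is_pushout (lI r) g m k.

Definition dpo_comatch (r : rule) X (m : hom (rI r) X) Y (n : hom (rO r) Y)
  : Prop :=
  exists (D : tgraph A) (g : hom (rK r) D) (k : hom D X) (k' : hom D Y),
    is_pushout (lI r) g m k /\ is_pushout (lO r) g n k'.

Definition dpo_result (r : rule) X (m : hom (rI r) X) Y : Prop :=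
  exists n : hom (rO r) Y, dpo_comatch m n.

(* DPO-admissibility of (r, c) along m (m in M is required separately) *)
Definition dpo_admissible (r : rule) (c : mcond (rI r)) X (m : hom (rI r) X)
  : Prop := c X m /\ pushout_complement m.

Variable cChem : cond empty.

(* m |= Shift(f, c)  iff  m o f |= c *)
Definition shift_sat P Q (f : hom P Q) (c : cond P) : mcond Q :=
  fun X m => sat c (comp m f).

(* m |= Trans(r, c_O)  iff the comatch satisfies c_O (admissible matches);
   stated as: every comatch of a DPO step along m satisfies c_O.            *)
Definition trans_sat (r : rule) (cO : mcond (rO r)) : mcond (rI r) :=
  fun X m => forall Y (n : hom (rO r) Y), dpo_comatch m n -> cO Y n.

Definition completion (r : rule) (cI : mcond (rI r)) : mcond (rI r) :=
  fun X m =>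
    shift_sat (init (rI r)) cChem m ->
    [/\ cI X m,
        trans_sat (shift_sat (init (rO r)) cChem) m &
        shift_sat (init (rI r)) cChem m].

(* Matches I -> X range over the finite type of pairs of finite functions. *)
Definition as_hom G H (p : {ffun V G -> V H} * {ffun E G -> E H}) : hom G H :=
  (fun v => p.1 v, fun e => p.2 e).

(* Restricted DPO representation rho_bar(delta_bar(r, c)) applied to |X>:
   sum over DPO-admissible matches m in M of the completed rule of |r_m(X)>.
   rho_coeff r c X Y = coefficient of the basis vector |Y> (Y a state),
   i.e. number of admissible matches whose result is isomorphic to Y.       *)
Definition rho_coeff (r : rule) (c : mcond (rI r)) X Y : nat :=
  #|[set p | `[< let m : hom (rI r) X := as_hom p in
                 [/\ ishom m, mono m, dpo_admissible (completion (r := r) c) m &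
                     dpo_result m Y] >]]|.

(* <| rho_bar(delta_bar(r, c)) |X>  with  <|Z> := 1 on every basis vector:
   the number of admissible matches.                                        *)
Definition rho_bra (r : rule) (c : mcond (rI r)) X : nat :=
  #|[set p | `[< let m : hom (rI r) X := as_hom p in
                 [/\ ishom m, mono m & dpo_admissible (completion (r := r) c) m] >]]|.

(* Restricted DPO jump-closure:  Obar(delta_bar(O<-K->I, c))
   := rho_bar(delta_bar(I<-K->I, c)).                                       *)
Definition Obar_coeff (r : rule) (c : mcond (rI r)) X Y : nat :=
  rho_coeff (r := jump r) c X Y.
Definition Obar_bra (r : rule) (c : mcond (rI r)) X : nat :=
  rho_bra (r := jump r) c X.

End Chem.

(* Main.v *)
Require Import Defs.
From mathcomp Require Import all_boot.
From mathcomp Require Import boolp.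
Set Implicit Arguments. Unset Strict Implicit. Unset Printing Implicit Defensive.
Local Notation comp := Defs.comp.
Local Notation init := Defs.init.

Section Aux.
Variable A : finType.
Implicit Types G H X Y Z : tgraph A.

Lemma heq_refl G H (f : hom G H) : heq f f.
Proof. by split. Qed.
Lemma heq_sym G H (f g : hom G H) : heq f g -> heq g f.
Proof. by case=> h1 h2; split=> x; rewrite ?h1 ?h2. Qed.
Lemma heq_trans G H (f g h : hom G H) : heq f g -> heq g h -> heq f h.
Proof. by case=> h1 h2 [h3 h4]; split=> x; rewrite ?h1 ?h2 ?h3 ?h4. Qed.
Lemma heq_compl G H Y (c : hom H Y) (f g : hom G H) :
  heq f g -> heq (comp c f) (comp c g).
Proof. by case=> h1 h2; split=> x /=; rewrite ?h1 ?h2. Qed.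
Lemma heq_compr P G H (f g : hom G H) (c : hom P G) :
  heq f g -> heq (comp f c) (comp g c).
Proof. by case=> h1 h2; split=> x /=; rewrite ?h1 ?h2. Qed.

Lemma ishom_comp G H Y (g : hom H Y) (f : hom G H) :
  ishom f -> ishom g -> ishom (comp g f).
Proof.
case=> f1 f2 [g1 g2]; split=> e /=; last by rewrite g2 f2.
by rewrite g1 f1 -imset_comp.
Qed.
Lemma ishom_id G : ishom (idh G).
Proof. by split=> e //=; rewrite imset_id. Qed.

Definition iso X Y := exists (f : hom X Y) (g : hom Y X),
  [/\ ishom f, ishom g, heq (comp g f) (idh X) & heq (comp f g) (idh Y)].

Lemma mono_comp G H Y (g : hom H Y) (f : hom G H) :
  mono f -> mono g -> mono (comp g f).
Proof. by case=> f1 f2 [g1 g2]; split; apply: inj_comp. Qed.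

Lemma sat_heq (P : tgraph A) (c : cond P) : forall X (m m' : hom P X),
  heq m m' -> sat c m -> sat c m'.
Proof.
elim: c => {P} [P|P Q f hf mf c IH|P c IH|P c1 IH1 c2 IH2] X m m' H /=.
- by [].
- case=> q [q1 q2 q3 q4]; exists q; split=> //; exact: heq_trans H.
- move=> Hn Hs; apply: Hn; apply: IH Hs; exact: heq_sym.
- by case=> /IH1 -/(_ _ H) ? /IH2 -/(_ _ H).
Qed.

Lemma sat_iso (P : tgraph A) (c : cond P) : forall X Y (f : hom X Y) (g : hom Y X),
  ishom f -> ishom g -> heq (comp g f) (idh X) -> heq (comp f g) (idh Y) ->
  forall m : hom P X, sat c m -> sat c (comp f m).
Proof.
elim: c => {P} [P|P Q f hf mf c IH|P c IH|P c1 IH1 c2 IH2] X Y u v hu hv huv hvu m /=.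
- by [].
- case=> q [q1 q2 q3 q4]; exists (comp u q); split.
  + exact: ishom_comp.
  + apply: mono_comp => //; case: huv => h1 h2; split.
    * apply: (@can_inj _ _ _ v.1) => x; exact: h1 x.
    * apply: (@can_inj _ _ _ v.2) => x; exact: h2 x.
  + by case: q3 => a b; split=> x; [exact: (congr1 u.1 (a x)) | exact: (congr1 u.2 (b x))].
  + exact: (IH _ _ _ _ hu hv huv hvu _ q4).
- move=> Hn Hs; apply: Hn.
  have := IH _ _ _ _ hv hu hvu huv _ Hs.
  apply: sat_heq; by case: huv => a b; split=> x; [exact: a | exact: b].
- by case=> /IH1 -/(_ _ _ _ hu hv huv hvu) ? /IH2 -/(_ _ _ _ hu hv huv hvu).
Qed.

Lemma heq_init X G (m : hom G X) : heq (comp m (init G)) (init X).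
Proof. by split; case. Qed.


Lemma heq_comp2 P G H Y (a : hom G H) (b : hom P G) (c : hom P H)
  (d : hom H Y) (e : hom P Y) :
  heq (comp a b) c -> heq (comp d c) e -> heq (comp (comp d a) b) e.
Proof.
case=> a1 a2 [b1 b2]; split=> x /=;
  [move: (a1 x) (b1 x) => /= -> -> // | move: (a2 x) (b2 x) => /= -> -> //].
Qed.

Lemma heq_cancel P G H Y (x : hom G Y) (w : hom P G) (u : hom P Y)
  (f : hom G H) (g : hom H G) :
  heq (comp g f) (idh G) -> heq (comp x w) u ->
  heq (comp (comp x g) (comp f w)) u.
Proof.
case=> a1 a2 [b1 b2]; split=> v /=;
  [move: (a1 (w.1 v)) (b1 v) => /= -> -> // | move: (a2 (w.2 v)) (b2 v) => /= -> -> //].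
Qed.

Lemma heq_uncancel G H Y (y : hom H Y) (x : hom G Y) (f : hom G H) (g : hom H G) :
  heq (comp f g) (idh H) -> heq (comp y f) x -> heq y (comp x g).
Proof.
case=> a1 a2 [b1 b2]; split=> v /=;
  [move: (b1 (g.1 v)) (a1 v) => /= <- -> | move: (b2 (g.2 v)) (a2 v) => /= <- ->];
  by [].
Qed.

Lemma po_unique (P B C D1 D2 : tgraph A) (f : hom P B) (g : hom P C) (h : hom B D1)
  (k : hom C D1) (h' : hom B D2) (k' : hom C D2) :
  is_pushout f g h k -> is_pushout f g h' k' -> iso D1 D2.
Proof.
case=> [[hf hg] hh hk hc U1] [_ hh' hk' hc' U2].
have [x [hx xh xk _]] := U1 _ h' k' hh' hk' hc'.
have [y [hy yh yk _]] := U2 _ h k hh hk hc.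
have [x' [hx' x'h x'k _]] := U2 _ h' k' hh' hk' hc'.
have [x'' [_ _ _ Ux']] := U2 _ h' k' hh' hk' hc'.
have [z [hz _ _ Uz]] := U1 _ h k hh hk hc.
exists x, y; split=> //.
- apply: heq_trans (heq_sym (Uz (idh _) (ishom_id _) _ _)).
  + apply: Uz; first exact: ishom_comp.
    * exact: heq_comp2 xh yh.
    * exact: heq_comp2 xk yk.
  + by split.
  + by split.
- apply: heq_trans (heq_sym (Ux' (idh _) (ishom_id _) _ _)).
  + apply: Ux'; first exact: ishom_comp.
    * exact: heq_comp2 yh xh.
    * exact: heq_comp2 yk xk.
  + by split.
  + by split.
Qed.

Lemma po_iso (P B C D1 D2 : tgraph A) (f : hom P B) (g : hom P C) (h : hom B D1)
  (k : hom C D1) (u : hom D1 D2) (v : hom D2 D1) :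
  ishom u -> ishom v -> heq (comp v u) (idh D1) -> heq (comp u v) (idh D2) ->
  is_pushout f g h k -> is_pushout f g (comp u h) (comp u k).
Proof.
move=> hu hv vu uv [[hf hg] hh hk hc U]; split.
- by [].
- exact: ishom_comp.
- exact: ishom_comp.
- by case: hc => a b; split=> x; [exact: (congr1 u.1 (a x)) | exact: (congr1 u.2 (b x))].
- move=> Z p q hp hq hpq.
  have [x [hx xh xk Ux]] := U _ p q hp hq hpq.
  exists (comp x v); split.
  + exact: ishom_comp.
  + exact: heq_cancel.
  + exact: heq_cancel.
  + move=> y hy yh yk.
    apply: heq_uncancel uv _.
    by apply: Ux => //; exact: ishom_comp.
Qed.


Section PC.
Variables (K I X : tgraph A) (l : hom K I) (m : hom I X).

Definition bad (e : E X) : bool :=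
  [exists i, m.2 i == e] && [forall j, m.2 (l.2 j) != e].

Lemma gP j : ~~ bad (m.2 (l.2 j)).
Proof.
rewrite /bad negb_and; apply/orP; right; apply/forallPn; exists j.
by rewrite negbK.
Qed.

Definition ED := {e : E X | ~~ bad e}.

Definition Dg : tgraph A :=
  @TGraph A (V X) {e : E X | ~~ bad e} (fun d => ends X (val d))
    (fun d => @ends_ok A X (val d)) (fun d => typ X (val d)).

Definition gg : hom K Dg :=
  (fun v => m.1 (l.1 v), fun j => exist _ (m.2 (l.2 j)) (gP j) : E Dg).

Definition kk : hom Dg X := (fun v => v, fun d => val d).

Lemma noP e : (fun i => m.2 i == e) =1 xpred0 -> ~~ bad e.
Proof.
move=> H; rewrite /bad negb_and; apply/orP; left; apply/existsPn => i.
by rewrite H.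
Qed.

Definition xx2 Z (u : hom I Z) (v : hom Dg Z) (e : E X) : E Z :=
  match pickP (fun i => m.2 i == e) with
  | Pick i _ => u.2 i
  | Nopick H => v.2 (exist _ e (noP H))
  end.

Lemma split_e e : (exists i, m.2 i = e) \/ ~~ bad e.
Proof.
case: (boolP (bad e)) => [/andP [/existsP [i /eqP Hi] _]|]; last by right.
by left; exists i.
Qed.

Lemma pc_exists : ishom l -> mono l -> bijective l.1 -> ishom m -> mono m ->
  is_pushout l gg m kk.
Proof.
move=> hl ml bl hm mm.
have xx2_m Z (u : hom I Z) v i : xx2 u v (m.2 i) = u.2 i.
  rewrite /xx2; case: (pickP (fun i' => m.2 i' == m.2 i)) => [i' /eqP /(proj2 mm) -> | H] //.
  by have := H i; rewrite eqxx.
have hg : ishom gg.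
  split=> j /=; last by rewrite (proj2 hm) (proj2 hl).
  by rewrite (proj1 hm) (proj1 hl) -imset_comp.
have hk : ishom kk by split=> d //=; rewrite imset_id.
split=> //.
move=> Z u v hu hv huv.
have xx2_good (d : E Dg) : xx2 u v (val d) = v.2 d.
  rewrite /xx2; case: (pickP (fun i' => m.2 i' == val d)) => [i /eqP Hi | H].
    have := valP d; rewrite /bad negb_and => /orP [/existsPn H|].
      by have := H i; rewrite Hi eqxx.
    move=> /forallPn [j]; rewrite negbK => /eqP Hj.
    move: Hi; rewrite -Hj => /(proj2 mm) ->.
    have -> : d = gg.2 j by apply: val_inj.
    exact: (proj2 huv j).
  by congr (v.2 _); apply: val_inj.
have vx w : v.1 (m.1 w) = u.1 w.
  case: bl => li _ K2; move: (proj1 huv (li w)) => /=; rewrite K2 => -> //.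
exists (v.1, xx2 u v); split.
- split=> e /=; (case: (split_e e) => [[i <-]|He];
    [rewrite xx2_m | rewrite (xx2_good (exist _ e He))]).
  + rewrite (proj1 hu) (proj1 hm) -imset_comp; apply: eq_imset => w /=.
    by rewrite vx.
  + by rewrite (proj1 hv).
  + by rewrite (proj2 hu) (proj2 hm).
  + by rewrite (proj2 hv).
- by split=> w /=; [rewrite vx | rewrite xx2_m].
- by split=> d /=; [| rewrite xx2_good].
- move=> y hy yh yk; split=> w /=.
    exact: (proj1 yk w).
  case: (split_e w) => [[i <-]|He].
    by rewrite xx2_m; exact: (proj2 yh i).
  rewrite (xx2_good (exist _ w He)); exact: (proj2 yk (exist _ w He)).
Qed.

End PC.


Lemma pc_id (I X : tgraph A) (m : hom I X) :
  ishom m -> is_pushout (idh I) m m (idh X).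
Proof.
move=> hm; split.
- by split=> //; exact: ishom_id.
- by [].
- exact: ishom_id.
- by split.
- move=> Z u v hu hv huv; exists v; split=> //.
  + by case: huv => a b; split=> x; [exact: (esym (a x)) | exact: (esym (b x))].
Qed.

Lemma dpo_result_jump (s : rule A) X (m : hom (rI s) X) Y :
  dpo_result (r := jump s) m Y <-> pushout_complement (r := jump s) m /\ iso X Y.
Proof.
split.
- case=> n [D [g [k [k' [P1 P2]]]]]; split; first by exists D, g, k.
  exact: po_unique P1 P2.
- case=> [[D [g [k P1]]] [u [v [hu hv vu uv]]]].
  exists (comp u m), D, g, k, (comp u k); split=> //.
  exact: (po_iso hu hv vu uv P1).
Qed.

Lemma adm_jump_iff (s : rule A) (cC : cond (empty A)) X (HX : models X cC)
  (c : mcond (rI s)) (m : hom (rI s) X) :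
  dpo_admissible (completion cC (r := jump s) c) m <->
  c X m /\ pushout_complement (r := jump s) m.
Proof.
have Hs : shift_sat (init (rI s)) cC m.
  exact: (sat_heq (heq_sym (heq_init m)) HX).
split.
- by case=> Hc Hpc; case: (Hc Hs).
- case=> Hc Hpc; split=> // _; split=> //.
  move=> Y n [D [g [k [k' [P1 P2]]]]].
  have [u [v [hu hv vu uv]]] := po_unique P1 P2.
  rewrite /shift_sat; apply: (sat_heq (heq_sym (heq_init n))).
  apply: (sat_heq (heq_init u)); exact: (sat_iso hu hv vu uv HX).
Qed.

End Aux.

Theorem mainTheorem10 (A : finType) (cChem : cond (empty A)) (r : rule A)
    (cI : cond (rI r)) :
  linear_rule r -> vertex_iso r ->
  let cbar : mcond (rI r) := completion cChem (fun X m => sat cI m) in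
  forall X : tgraph A, models X cChem ->
    Obar_bra cChem cbar X = Obar_bra cChem (r := rid (rI r)) cbar X /\
    (forall Y : tgraph A, models Y cChem ->
       Obar_coeff cChem cbar X Y = Obar_coeff cChem (r := rid (rI r)) cbar X Y).
Proof.
move=> [hlO hlI mlO mlI] [_ blI] cbar X HX.
have pcr : forall m : hom (rI r) X, ishom m -> mono m ->
    pushout_complement (r := jump r) m.
  move=> m hm mm; exists (Dg (lI r) m), (gg (lI r) m), (kk (lI r) m).
  exact: pc_exists.
have pci : forall m : hom (rI r) X, ishom m ->
    pushout_complement (r := jump (rid (rI r))) m.
  by move=> m hm; exists X, m, (idh X); exact: pc_id.
split.
- rewrite /Obar_bra /rho_bra; apply: eq_card => p; rewrite !inE.
  apply/asboolP/asboolP => /=.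
  + case=> h1 h2 /(adm_jump_iff HX) [h3 _]; split=> //.
    by apply/(adm_jump_iff HX); split=> //; exact: pci.
  + case=> h1 h2 /(adm_jump_iff HX) [h3 _]; split=> //.
    by apply/(adm_jump_iff HX); split=> //; exact: pcr.
- move=> Y HY.
  rewrite /Obar_coeff /rho_coeff; apply: eq_card => p; rewrite !inE.
  apply/asboolP/asboolP => /=.
  + case=> h1 h2 /(adm_jump_iff HX) [h3 _] /dpo_result_jump [_ hi]; split=> //.
      by apply/(adm_jump_iff HX); split=> //; exact: pci.
    by apply/dpo_result_jump; split=> //; exact: pci.
  + case=> h1 h2 /(adm_jump_iff HX) [h3 _] /dpo_result_jump [_ hi]; split=> //.
      by apply/(adm_jump_iff HX); split=> //; exact: pcr.
    by apply/dpo_result_jump; split=> //; exact: pcr.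
Qed.
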